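(* Let $\mathcal{M}$ be a matroid on $[m]$ with base polytope $P$, let $x_0\in P$, and let $\hat x=\chi(S)$ be the (random) extreme point of $P$ output by randomized pipage rounding started at $x_0$. Let $f:2^{[m]}\to\mathbb{R}$ be non-negative, monotone non-decreasing and submodular with marginals $f(T\cup\{i\})-f(T)\in[0,1]$, let $F(x)=\mathbb{E}_{X\sim\mathcal{D}(x)}[f(X)]$ be its multilinear extension, and let $\mu=F(x_0)$. Then for every $\delta\in[0,1)$, \[ \Pr\big[f(S)\le(1-\delta)\mu\big]\le \exp(-\delta^2\mu/2). \]
   Context: The base polytope of a matroid is the convex hull of the characteristic vectors $\chi(B)\in\{0,1\}^m$ of its bases. For $x\in[0,1]^m$, $\mathcal{D}(x)$ is the product distribution on $\{0,1\}^m$ (identified with subsets of $[m]$) with $\Pr[X_i=1]=x_i$ independently. Randomized pipage rounding started at $x_0\in P$: set $p=x_0$; while $p$ is not an extreme point of $P$, choose distinct $a,b\in[m]$ such that $p+z(e_a-e_b)\in P$ for all $z$ in some open neighborhood of $0$ (such $a,b$ exist whenever $p$ is not extreme), let $\ell=\min\{z: p+z(e_a-e_b)\in P\}<0<u=\max\{z:p+z(e_a-e_b)\in P\}$, and replace $p$ by $p+\ell(e_a-e_b)$ with probability $u/(u-\ell)$ and by $p+u(e_a-e_b)$ with probability $-\ell/(u-\ell)$ (independently of the past given the current state); output the final extreme point. The choice of $a,b$ may be arbitrary (subject to the stated condition). *)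

(* Defs.v *)
From HB Require Import structures.
From mathcomp Require Import all_boot.
From Stdlib Require Import Reals.

Set Implicit Arguments.
Unset Strict Implicit.
Unset Printing Implicit Defensive.

Definition point (m : nat) := 'I_m -> R.

Definition chi (m : nat) (S : {set 'I_m}) : point m :=
  fun i => if i \in S then 1%R else 0%R.

Definition is_matroid_bases (m : nat) (B : {set {set 'I_m}}) : Prop :=
  B != set0 /\
  forall B1 B2, B1 \in B -> B2 \in B ->
    forall x, x \in B1 :\: B2 ->
      exists y, y \in B2 :\: B1 /\ (y |: (B1 :\ x)) \in B.

Definition in_base_polytope (m : nat) (B : {set {set 'I_m}}) (x : point m) : Prop :=
  exists lam : {set 'I_m} -> R,
    (forall S, (0 <= lam S)%R) /\
    (forall S, S \notin B -> lam S = 0%R) /\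
    \big[Rplus/0%R]_(S : {set 'I_m}) lam S = 1%R /\
    forall i, x i = \big[Rplus/0%R]_(S : {set 'I_m}) (lam S * chi S i)%R.

Definition extreme (m : nat) (P : point m -> Prop) (x : point m) : Prop :=
  P x /\
  forall (y z : point m) (t : R), P y -> P z -> (0 < t < 1)%R ->
    (forall i, x i = t * y i + (1 - t) * z i)%R ->
    forall i, y i = z i.

Definition move (m : nat) (p : point m) (a b : 'I_m) (z : R) : point m :=
  fun i => (p i + z * ((if i == a then 1 else 0) - (if i == b then 1 else 0)))%R.

Definition scale_entry (m : nat) (c : R) (wp : R * point m) : R * point m :=
  ((c * wp.1)%R, wp.2).

(* pipage P p D : D (a finite list of (probability, output point)) is the output
   distribution of randomized pipage rounding started at p, for SOME (adaptive,
   history-dependent) choice of the pairs (a,b) along the run. *)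
Inductive pipage (m : nat) (P : point m -> Prop) : point m -> seq (R * point m) -> Prop :=
| pipage_stop p : extreme P p -> pipage P p [:: (1%R, p)]
| pipage_step p (a b : 'I_m) (l u : R) D1 D2 :
    ~ extreme P p -> a != b ->
    (exists eps, (0 < eps)%R /\ forall z, (Rabs z < eps)%R -> P (move p a b z)) ->
    P (move p a b l) -> (forall z, P (move p a b z) -> (l <= z)%R) ->
    P (move p a b u) -> (forall z, P (move p a b z) -> (z <= u)%R) ->
    pipage P (move p a b l) D1 ->
    pipage P (move p a b u) D2 ->
    pipage P p (map (scale_entry (u / (u - l))%R) D1 ++
                map (scale_entry (- l / (u - l))%R) D2).

Definition supp (m : nat) (x : point m) : {set 'I_m} :=
  [set i | if Req_EM_T (x i) 1%R then true else false].

Definition prob_f_le (m : nat) (D : seq (R * point m)) (f : {set 'I_m} -> R) (c : R) : R :=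
  foldr (fun wp acc => ((if Rle_dec (f (supp wp.2)) c then wp.1 else 0) + acc)%R) 0%R D.

Definition multilinear (m : nat) (f : {set 'I_m} -> R) (x : point m) : R :=
  \big[Rplus/0%R]_(S : {set 'I_m})
     (f S * \big[Rmult/1%R]_(i : 'I_m) (if i \in S then x i else 1 - x i))%R.

(* Main.v *)
Require Import Defs.
From HB Require Import structures.
From mathcomp Require Import all_boot.
From Stdlib Require Import Reals Lra.
From Stdlib Require Import FunctionalExtensionality Classical.

From Coquelicot Require Coquelicot.
Module Calc.
Import Coquelicot.Coquelicot.
Open Scope R_scope.
Lemma exp_neg_taylor y : 0 <= y -> exp (- y) <= 1 - y + y * y / 2.
Proof.
intros Hy.
set (g := fun t => (1 - t + t * t / 2) * exp t).
assert (forall t : R, is_derive g t (t * t / 2 * exp t)) as Hd.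
intros t. unfold g. auto_derive. { exact I. } field.
destruct (MVT_gen g 0 y (fun t => t * t / 2 * exp t)) as [c [Hc Heq]].
- intros; apply Hd.
- intros x _. apply continuity_pt_filterlim. apply (ex_derive_continuous g x). eexists; apply Hd.
- assert (E1 : Rmin 0 y = 0) by (apply Rmin_left; lra). assert (E2 : Rmax 0 y = y) by (apply Rmax_right; lra).
  rewrite E1 E2 in Hc.
  unfold g in Heq. rewrite exp_0 in Heq.
  assert (0 <= c * c / 2 * exp c * (y - 0)).
  { apply Rmult_le_pos; [|lra]. apply Rmult_le_pos; [|left; apply exp_pos]. nra. }
  assert (H1 : 1 <= (1 - y + y*y/2) * exp y) by lra.
  assert (Hm : exp (-y) * exp y = 1) by (rewrite <- exp_plus; replace (-y+y) with 0 by ring; apply exp_0).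
  pose proof (exp_pos y). pose proof (exp_pos (-y)). nra.
Qed.
End Calc.

Set Implicit Arguments.
Unset Strict Implicit.
Unset Printing Implicit Defensive.

Local Open Scope R_scope.

Lemma RplusA : associative Rplus. Proof. by move=> x y z; rewrite Rplus_assoc. Qed.
Lemma RmultA : associative Rmult. Proof. by move=> x y z; rewrite Rmult_assoc. Qed.
HB.instance Definition _ := Monoid.isComLaw.Build R 0%R Rplus RplusA Rplus_comm Rplus_0_l.
HB.instance Definition _ := Monoid.isComLaw.Build R 1%R Rmult RmultA Rmult_comm Rmult_1_l.

Section Ex.
Variable m : nat.
Implicit Types (x : point m) (S T : {set 'I_m}) (H : {set 'I_m} -> R) (i : 'I_m).

Definition wgt x S : R :=
  \big[Rmult/1]_(i : 'I_m) (if i \in S then x i else 1 - x i).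
Definition Ex x H : R := \big[Rplus/0]_(S : {set 'I_m}) (H S * wgt x S).
Definition Wo x (i : 'I_m) S : R :=
  \big[Rmult/1]_(j | j != i) (if j \in S then x j else 1 - x j).
Definition upd x (i : 'I_m) (v : R) : point m := fun j => if j == i then v else x j.
Definition in01 x := forall j, 0 <= x j <= 1.

Lemma sum_scale (I : finType) (P : pred I) (F : I -> R) k :
  \big[Rplus/0]_(j | P j) (k * F j) = k * \big[Rplus/0]_(j | P j) F j.
Proof.
apply: (big_rec2 (fun a b => a = k * b)); first by ring.
by move=> j a b _ ->; ring.
Qed.

Lemma sum_le (I : finType) (P : pred I) (F G : I -> R) :
  (forall j, P j -> F j <= G j) ->
  \big[Rplus/0]_(j | P j) F j <= \big[Rplus/0]_(j | P j) G j.
Proof.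
move=> h; apply: (big_ind2 (fun a b => a <= b)); [lra| |]; last by [].
move=> *; lra.
Qed.

Lemma wgt_ge0 x S : in01 x -> 0 <= wgt x S.
Proof.
move=> h; apply: (big_ind (fun a => 0 <= a)); [lra| |].
- by move=> a b ha hb; apply: Rmult_le_pos.
- by move=> j _; case: (j \in S); have := h j; lra.
Qed.

Lemma Ex_le x H1 H2 : in01 x -> (forall S, H1 S <= H2 S) -> Ex x H1 <= Ex x H2.
Proof.
move=> h hle; apply: sum_le => S _; apply: Rmult_le_compat_r; first exact: wgt_ge0.
exact: hle.
Qed.

Lemma Ex_ge0 x H : in01 x -> (forall S, 0 <= H S) -> 0 <= Ex x H.
Proof.
move=> h hle; apply: (big_ind (fun a => 0 <= a)); [lra| |].
- move=> *; lra.
- by move=> S _; apply: Rmult_le_pos; [exact: hle | exact: wgt_ge0].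
Qed.

Lemma Ex_add x H1 H2 : Ex x (fun S => H1 S + H2 S) = Ex x H1 + Ex x H2.
Proof.
rewrite /Ex -big_split /=; apply: eq_bigr => S _; ring.
Qed.

Lemma Ex_scale x H k : Ex x (fun S => k * H S) = k * Ex x H.
Proof.
rewrite /Ex -sum_scale; apply: eq_bigr => S _; ring.
Qed.

Lemma Ex_ext x H1 H2 : (forall S, H1 S = H2 S) -> Ex x H1 = Ex x H2.
Proof. by move=> h; apply: eq_bigr => S _; rewrite h. Qed.

Definition tog (i : 'I_m) S := if i \in S then S :\ i else i |: S.

Lemma tog_inv i : involutive (tog i).
Proof.
move=> S; rewrite /tog; case: (boolP (i \in S)) => hi.
- rewrite setD11 setD1K //.
- by rewrite setU11 setU1K.
Qed.

Lemma split_sum (F : {set 'I_m} -> R) (i : 'I_m) :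
  \big[Rplus/0]_(S : {set 'I_m}) F S = \big[Rplus/0]_(S : {set 'I_m} | i \notin S) (F S + F (i |: S)).
Proof.
rewrite (bigID (fun S => i \in S)) /= Rplus_comm big_split /=; congr (_ + _).
rewrite (reindex_inj (inv_inj (tog_inv i))) /=.
apply: eq_big => S.
- rewrite /tog; case: (boolP (i \in S)) => hi; first by rewrite setD11.
  by rewrite setU11.
- rewrite /tog; case hS: (i \in S) => //; by rewrite setD11.
Qed.

Lemma wgt_split x i S :
  wgt x S = (if i \in S then x i else 1 - x i) * Wo x i S.
Proof. by rewrite /wgt (bigD1 i). Qed.

Lemma Wo_U1 x i S : Wo x i (i |: S) = Wo x i S.
Proof.
apply: eq_bigr => j hj; by rewrite in_setU1 (negbTE hj).
Qed.

Lemma Wo_upd x i v S : Wo (upd x i v) i S = Wo x i S.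
Proof.
apply: eq_bigr => j hj; by rewrite /upd (negbTE hj).
Qed.

Lemma Ex_split x i H :
  Ex x H = \big[Rplus/0]_(S : {set 'I_m} | i \notin S)
             (Wo x i S * ((1 - x i) * H S + x i * H (i |: S))).
Proof.
rewrite /Ex (split_sum _ i); apply: eq_bigr => S hi.
rewrite !(wgt_split x i) Wo_U1 setU11 (negbTE hi); ring.
Qed.

Lemma upd_same x i v : upd x i v i = v.
Proof. by rewrite /upd eqxx. Qed.

Lemma Ex_upd0 x i H :
  Ex (upd x i 0) H = \big[Rplus/0]_(S : {set 'I_m} | i \notin S) (Wo x i S * H S).
Proof.
rewrite (Ex_split _ i) upd_same; apply: eq_bigr => S _; rewrite Wo_upd; ring.
Qed.

Lemma Ex_upd1 x i H :
  Ex (upd x i 1) H = \big[Rplus/0]_(S : {set 'I_m} | i \notin S) (Wo x i S * H (i |: S)).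
Proof.
rewrite (Ex_split _ i) upd_same; apply: eq_bigr => S _; rewrite Wo_upd; ring.
Qed.

Lemma Ex_upd1' x i H :
  Ex (upd x i 1) H = Ex (upd x i 0) (fun S => H (i |: S)).
Proof. by rewrite Ex_upd1 Ex_upd0. Qed.

Lemma Ex_decomp x i H :
  Ex x H = (1 - x i) * Ex (upd x i 0) H + x i * Ex (upd x i 1) H.
Proof.
rewrite (Ex_split _ i) Ex_upd0 Ex_upd1 -!sum_scale -big_split /=.
apply: eq_bigr => S _; ring.
Qed.


Lemma exp_mono a b : a <= b -> exp a <= exp b.
Proof.
move=> h; case: (Rle_lt_or_eq_dec _ _ h) => [h'|->]; last by apply: Rle_refl.
by left; apply: exp_increasing.
Qed.

Lemma wgt_chi S0 S : wgt (chi S0) S = if S == S0 then 1 else 0.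
Proof.
case: eqP => [->|neq].
- by apply: big1 => j _; rewrite /chi; case: (j \in S0); ring.
- have [j hj] : exists j, (j \in S) != (j \in S0).
    apply: NNPP => hn; apply: neq; apply/setP => j.
    case: (boolP ((j \in S) != (j \in S0))) => h; first by exfalso; apply: hn; exists j.
    by move/negPn: h => /eqP.
  rewrite /wgt (bigD1 j) //=.
  have -> : (if j \in S then chi S0 j else 1 - chi S0 j) = 0.
    by move: hj; rewrite /chi; case: (j \in S); case: (j \in S0) => //= _; ring.
  by rewrite Rmult_0_l.
Qed.

Lemma Ex_chi S0 H : Ex (chi S0) H = H S0.
Proof.
rewrite /Ex (bigD1 S0) //= big1 => [|S hS].
- by rewrite wgt_chi eqxx; ring.
- by rewrite wgt_chi (negbTE hS); ring.
Qed.

Definition isfr (r : R) : bool :=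
  if Req_EM_T r 0 then false else if Req_EM_T r 1 then false else true.
Definition nfr x := #|[set j | isfr (x j)]|.

Lemma isfr01 v : v = 0 \/ v = 1 -> isfr v = false.
Proof.
rewrite /isfr; case: (Req_EM_T v 0) => // h0; case: (Req_EM_T v 1) => // h1.
by case.
Qed.

Lemma nfr_upd x i v : isfr (x i) -> v = 0 \/ v = 1 -> leq (nfr (upd x i v)).+1 (nfr x).
Proof.
move=> hi hv; apply: proper_card; apply/properP; split.
- apply/subsetP => j; rewrite !inE /upd; case: eqP => // _.
  by rewrite isfr01.
- by exists i; rewrite !inE // upd_same isfr01.
Qed.

Lemma x_chi x : (forall j, ~~ isfr (x j)) -> x = chi (supp x).
Proof.
move=> h; apply: functional_extensionality => j.
have := h j; rewrite /chi /supp inE /isfr.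
case: (Req_EM_T (x j) 1) => h1; case: (Req_EM_T (x j) 0) => h0 //.
Qed.

Lemma fr_ind (P : point m -> Prop) :
  (forall S0, P (chi S0)) ->
  (forall x i, isfr (x i) -> P (upd x i 0) -> P (upd x i 1) -> P x) ->
  forall x, P x.
Proof.
move=> hb hs x; move: {2}(nfr x) (leqnn (nfr x)) => n.
elim: n x => [|n IH] x hn; case: (pickP (fun j => isfr (x j))) => [i hi|hnone].
- exfalso; have := nfr_upd hi (or_introl erefl).
  by move: hn; rewrite leqn0 => /eqP ->.
- by rewrite (x_chi (fun j => negbT (hnone j))).
- apply: (hs x i hi); apply: IH; rewrite -ltnS.
  + exact: leq_trans (nfr_upd hi (or_introl erefl)) hn.
  + exact: leq_trans (nfr_upd hi (or_intror erefl)) hn.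
- by rewrite (x_chi (fun j => negbT (hnone j))).
Qed.

Lemma in01_upd x i v : in01 x -> 0 <= v <= 1 -> in01 (upd x i v).
Proof. by move=> h hv j; rewrite /upd; case: eqP. Qed.

Lemma Ex_const x k : Ex x (fun _ => k) = k.
Proof.
elim/fr_ind: x => [S0|x i _ IH0 IH1]; first by rewrite Ex_chi.
by rewrite (Ex_decomp x i) IH0 IH1; ring.
Qed.

Lemma harris x F G : in01 x ->
  (forall S T, S \subset T -> F T <= F S) ->
  (forall S T, S \subset T -> G S <= G T) ->
  Ex x (fun S => F S * G S) <= Ex x F * Ex x G.
Proof.
move=> + hF hG; elim/fr_ind: x => [S0 _ | x i hi IH0 IH1 hx].
- by rewrite !Ex_chi; apply: Rle_refl.
- have h0 : in01 (upd x i 0) by apply: in01_upd => //; lra.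
  have h1 : in01 (upd x i 1) by apply: in01_upd => //; lra.
  rewrite (Ex_decomp x i (fun S => _)) (Ex_decomp x i F) (Ex_decomp x i G).
  have a01 : Ex (upd x i 1) F <= Ex (upd x i 0) F.
    by rewrite Ex_upd1'; apply: Ex_le => // S; apply: hF; apply: subsetUr.
  have b01 : Ex (upd x i 0) G <= Ex (upd x i 1) G.
    by rewrite Ex_upd1'; apply: Ex_le => // S; apply: hG; apply: subsetUr.
  have I0 := IH0 h0; have I1 := IH1 h1; have tx := hx i.
  set t := x i in tx *.
  set a0 := Ex (upd x i 0) F in a01 I0 *.
  set a1 := Ex (upd x i 1) F in a01 I1 *.
  set b0 := Ex (upd x i 0) G in b01 I0 *.
  set b1 := Ex (upd x i 1) G in b01 I1 *.
  set X0 := Ex (upd x i 0) _ in I0 *.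
  set X1 := Ex (upd x i 1) _ in I1 *.
  have k1 : (1 - t) * X0 <= (1 - t) * (a0 * b0) by apply: Rmult_le_compat_l; lra.
  have k2 : t * X1 <= t * (a1 * b1) by apply: Rmult_le_compat_l; lra.
  have k3 : 0 <= (t * (1 - t)) * ((a0 - a1) * (b1 - b0)).
    by apply: Rmult_le_pos; apply: Rmult_le_pos; lra.
  nra.
Qed.


Section IC.
Variable g : {set 'I_m} -> R.
Hypothesis g_nonneg : forall S, 0 <= g S.
Hypothesis g_mono : forall S T, S \subset T -> g S <= g T.
Hypothesis g_submod : forall S T, g (S :|: T) + g (S :&: T) <= g S + g T.
Hypothesis g_marg : forall T i, 0 <= g (i |: T) - g T <= 1.
Variable lam : R.
Hypothesis hlam : 0 <= lam <= 1.

Lemma d_anti i S T : S \subset T -> g (i |: T) - g T <= g (i |: S) - g S.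
Proof.
move=> hST.
have e1 : (i |: S) :|: T = i |: T by rewrite -setUA (setUidPr hST).
have e2 : S \subset (i |: S) :&: T by rewrite subsetI subsetUr hST.
have := g_submod (i |: S) T; rewrite e1 => h.
have h2 := g_mono e2. move: h h2; set z := g (_ :&: _) => h h2. lra.
Qed.

Lemma ic x : in01 x ->
  Ex x (fun S => exp (- lam * g S)) <= exp ((- lam + lam * lam / 2) * Ex x g).
Proof.
set c := - lam + lam * lam / 2.
have hc : c <= 0 by rewrite /c; nra.
elim/fr_ind: x => [S0 _ | x i hi IH0 IH1 hx].
- rewrite !Ex_chi; apply: exp_mono; have := g_nonneg S0 => hg; rewrite /c; nra.
- have h0 : in01 (upd x i 0) by apply: in01_upd => //; lra.
  set t := x i; have tx : 0 <= t <= 1 by exact: hx.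
  set y := upd x i 0.
  set h := fun S => exp (- lam * g S).
  set d := fun S => g (i |: S) - g S.
  have hd : forall S, h (i |: S) <= h S * (1 + c * d S).
    move=> S; rewrite /h /d.
    have hm : 0 <= g (i |: S) - g S <= 1 := g_marg S i.
    move: hm; set u := g (i |: S) - g S => hm.
    have -> : - lam * g (i |: S) = - lam * g S + - (lam * u) by rewrite /u; ring.
    rewrite exp_plus; apply: Rmult_le_compat_l; first by left; apply: exp_pos.
    have hy : 0 <= lam * u by apply: Rmult_le_pos; lra.
    apply: (Rle_trans _ _ _ (Calc.exp_neg_taylor _ hy)).
    rewrite /c.
    have : lam * lam * (u * u) <= lam * lam * u.
      apply: Rmult_le_compat_l; first nra. nra.
    nra.
  have step1 : Ex x h <= Ex y (fun S => h S * (1 + t * c * d S)).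
    rewrite (Ex_decomp x i) Ex_upd1' -/y -/t.
    have -> : Ex y (fun S => h S * (1 + t * c * d S)) =
              Ex y (fun S => (1 - t) * h S + t * (h S * (1 + c * d S))).
      by apply: Ex_ext => S; ring.
    rewrite Ex_add !Ex_scale.
    have := Ex_le h0 hd; rewrite -/y => hh.
    have : t * Ex y (fun S => h (i |: S)) <= t * Ex y (fun S => h S * (1 + c * d S)).
      by apply: Rmult_le_compat_l; lra.
    lra.
  have step2 : Ex y (fun S => h S * (1 + t * c * d S)) <=
               Ex y h * Ex y (fun S => 1 + t * c * d S).
    apply: harris => // S T hST.
    - by rewrite /h; apply: exp_mono; have := g_mono hST; nra.
    - have := d_anti i hST; rewrite /d => hh.
      have htc : t * c <= 0 by nra.
      nra.
  have Ed : Ex y (fun S => 1 + t * c * d S) =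
            1 + t * c * (Ex y (fun S => g (i |: S)) - Ex y g).
    have -> : (fun S => 1 + t * c * d S) =
              (fun S => 1 + ((t * c) * g (i |: S) + (- (t * c)) * g S)).
      by apply: functional_extensionality => S; rewrite /d; ring.
    rewrite Ex_add Ex_const Ex_add !Ex_scale; ring.
  have Eg : Ex x g = Ex y g + t * (Ex y (fun S => g (i |: S)) - Ex y g).
    by rewrite (Ex_decomp x i) Ex_upd1' -/y -/t; ring.
  have I0 := IH0 h0; rewrite -/y -/h in I0.
  have pos : 0 <= Ex y h by apply: Ex_ge0 => // S; left; apply: exp_pos.
  have e3 : Ex y (fun S => 1 + t * c * d S) <=
            exp (t * c * (Ex y (fun S => g (i |: S)) - Ex y g)).
    by rewrite Ed; apply: exp_ineq1_le.
  apply: (Rle_trans _ _ _ step1); apply: (Rle_trans _ _ _ step2).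
  rewrite Eg.
  have -> : c * (Ex y g + t * (Ex y (fun S => g (i |: S)) - Ex y g)) =
            c * Ex y g + t * c * (Ex y (fun S => g (i |: S)) - Ex y g) by ring.
  rewrite exp_plus.
  apply: (Rle_trans _ (Ex y h * exp (t * c * (Ex y (fun S => g (i |: S)) - Ex y g)))).
    by apply: Rmult_le_compat_l.
  apply: Rmult_le_compat_r; first by left; apply: exp_pos.
  exact: I0.
Qed.
End IC.

End Ex.

Section Pip.
Variable m : nat.
Implicit Types (x p : point m) (S T : {set 'I_m}) (H : {set 'I_m} -> R) (a b : 'I_m).

Lemma sum_ind1 (S1 : {set 'I_m}) k :
  \big[Rplus/0]_(S : {set 'I_m}) (if S == S1 then k else 0) = k.
Proof.
rewrite (bigD1 S1) //= eqxx big1 => [|S hS]; first by ring.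
by rewrite (negbTE hS).
Qed.

Lemma sum_lin (F G : {set 'I_m} -> R) k1 k2 :
  \big[Rplus/0]_(S : {set 'I_m}) (k1 * F S + k2 * G S) =
  k1 * \big[Rplus/0]_(S : {set 'I_m}) F S + k2 * \big[Rplus/0]_(S : {set 'I_m}) G S.
Proof. by rewrite big_split /= !sum_scale. Qed.

Lemma P01 (B : {set {set 'I_m}}) x : in_base_polytope B x -> in01 x.
Proof.
case=> lam [hl0 [hoff [hsum hx]]] j; rewrite hx; split.
- apply (big_ind (fun r => 0 <= r)); [lra| move=> *; lra |].
  move=> S _; apply: Rmult_le_pos => //; rewrite /chi; case: (j \in S); lra.
- rewrite -hsum; apply: sum_le => S _.
  have := hl0 S; rewrite /chi; case: (j \in S) => h; nra.
Qed.

Lemma supp_chi S : supp (chi S) = S.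
Proof.
apply/setP => j; rewrite inE /chi; case: (j \in S);
  case: (Req_EM_T _ _) => // h; lra.
Qed.

Lemma ext_chi (B : {set {set 'I_m}}) p :
  extreme (in_base_polytope B) p -> exists S1, p = chi S1.
Proof.
case=> hP hext; have hP' := hP; case: hP' => lam [hl0 [hoff [hsum hx]]].
have [S1 hS1] : exists S1, 0 < lam S1.
  apply: NNPP => hn.
  have h0 : forall S, lam S = 0.
    move=> S; have := hl0 S; have : ~ 0 < lam S by move=> h; apply: hn; exists S.
    lra.
  move: hsum; rewrite big1 => [|S _]; [lra | exact: h0].
have hle1 : lam S1 <= 1.
  move: hsum; rewrite (bigD1 S1) //=; set s := (X in _ + X = _) => hs.
  have : 0 <= s.
    rewrite /s; apply: (big_ind (fun r => 0 <= r)); [lra| move=> *; lra | move=> S _; exact: hl0].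
  move=> ?; lra.
have hB : S1 \in B.
  case: (boolP (S1 \in B)) => // hB; have := hoff _ hB; lra.
set t := lam S1 / 2.
have ht : 0 < t < 1 by rewrite /t; lra.
have ht1 : 1 - t <> 0 by lra.
set z := fun i => (p i - t * chi S1 i) / (1 - t).
have hchiP : in_base_polytope B (chi S1).
  exists (fun S => if S == S1 then 1 else 0); split; [|split; [|split]].
  - by move=> S; case: (S == S1); lra.
  - move=> S hS; case: eqP => // e; by move: hS; rewrite e hB.
  - exact: sum_ind1.
  - move=> i; rewrite -(sum_ind1 S1 (chi S1 i)); apply: eq_bigr => S _.
    by case: eqP => [->|_]; ring.
have hzP : in_base_polytope B z.
  exists (fun S => / (1 - t) * lam S + (- / (1 - t)) * (if S == S1 then t else 0)).
  split; [|split; [|split]].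
  - move=> S; case: eqP => [->|_].
    + have hi : 0 < / (1 - t) by apply: Rinv_0_lt_compat; lra.
      have -> : / (1 - t) * lam S1 + - / (1 - t) * t = / (1 - t) * (lam S1 - t) by ring.
      apply: Rmult_le_pos; [lra | rewrite /t; lra].
    + have hi : 0 < / (1 - t) by apply: Rinv_0_lt_compat; lra.
      have := hl0 S => hh.
      have -> : / (1 - t) * lam S + - / (1 - t) * 0 = / (1 - t) * lam S by ring.
      apply: Rmult_le_pos; lra.
  - move=> S hS; rewrite hoff //; case: eqP => [e|_]; last by ring.
    by move: hS; rewrite e hB.
  - rewrite sum_lin hsum sum_ind1; field; lra.
  - move=> i; rewrite /z hx.
    have -> : \big[Rplus/0]_(S : {set 'I_m})
        ((/ (1 - t) * lam S + - / (1 - t) * (if S == S1 then t else 0)) * chi S i) =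
      \big[Rplus/0]_(S : {set 'I_m})
        (/ (1 - t) * (lam S * chi S i) + (- / (1 - t)) * (if S == S1 then t * chi S1 i else 0)).
      by apply: eq_bigr => S _; case: eqP => [->|_]; ring.
    rewrite sum_lin sum_ind1; field; lra.
exists S1; apply: functional_extensionality => i.
have e := hext (chi S1) z t hchiP hzP ht.
have hpz : forall j, p j = t * chi S1 j + (1 - t) * z j.
  by move=> j; rewrite /z; field.
have := e hpz i; have := hpz i; move=> h1 h2; rewrite h1 -h2; ring.
Qed.

Lemma move0 p a b : move p a b 0 = p.
Proof. by apply: functional_extensionality => j; rewrite /move; ring. Qed.

Lemma move_a p a b z : a != b -> move p a b z a = p a + z.
Proof. by move=> hab; rewrite /move eqxx (negbTE hab); ring. Qed.

Lemma move_b p a b z : a != b -> move p a b z b = p b - z.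
Proof. by move=> hab; rewrite /move eqxx eq_sym (negbTE hab); ring. Qed.

Lemma move_upd p a b z :
  upd (upd (move p a b z) a 0) b 0 = upd (upd p a 0) b 0.
Proof.
apply: functional_extensionality => j; rewrite /upd /move.
case: (j == b) => //; case: (j == a) => //; ring.
Qed.

Lemma Ex_quad x a b H : a != b ->
  Ex x H =
  (1 - x a) * ((1 - x b) * Ex (upd (upd x a 0) b 0) H
               + x b * Ex (upd (upd x a 0) b 0) (fun S => H (b |: S)))
  + x a * ((1 - x b) * Ex (upd (upd x a 0) b 0) (fun S => H (a |: S))
           + x b * Ex (upd (upd x a 0) b 0) (fun S => H (a |: (b |: S)))).
Proof.
move=> hab.
rewrite (Ex_decomp x a H) Ex_upd1'.
rewrite (Ex_decomp (upd x a 0) b H) (Ex_decomp (upd x a 0) b (fun S => H (a |: S))).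
rewrite !Ex_upd1'.
have -> : upd x a 0 b = x b by rewrite /upd eq_sym (negbTE hab).
done.
Qed.

Lemma pip_step p a b l u H : in01 p -> a != b -> l < 0 -> 0 < u ->
  (forall S, H (a |: S) + H (b |: S) <= H S + H (a |: (b |: S))) ->
  u / (u - l) * Ex (move p a b l) H + (- l / (u - l)) * Ex (move p a b u) H
  <= Ex p H.
Proof.
move=> hp hab hl hu hsup.
rewrite (Ex_quad (move p a b l) H hab) (Ex_quad (move p a b u) H hab) (Ex_quad p H hab).
rewrite !move_upd !move_a // !move_b //.
set y := upd (upd p a 0) b 0.
have hy : in01 y by apply: in01_upd; [apply: in01_upd|]; rewrite //; lra.
have K : Ex y (fun S => H (a |: S)) + Ex y (fun S => H (b |: S)) <=
         Ex y H + Ex y (fun S => H (a |: (b |: S))).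
  rewrite -!Ex_add; exact: Ex_le.
set A := Ex y H in K *.
set Bv := Ex y (fun S => H (b |: S)) in K *.
set C := Ex y (fun S => H (a |: S)) in K *.
set D := Ex y (fun S => H (a |: (b |: S))) in K *.
have e : forall pa pb,
  u / (u - l) * ((1 - (pa + l)) * ((1 - (pb - l)) * A + (pb - l) * Bv) +
                 (pa + l) * ((1 - (pb - l)) * C + (pb - l) * D)) +
  - l / (u - l) * ((1 - (pa + u)) * ((1 - (pb - u)) * A + (pb - u) * Bv) +
                 (pa + u) * ((1 - (pb - u)) * C + (pb - u) * D)) =
  (1 - pa) * ((1 - pb) * A + pb * Bv) + pa * ((1 - pb) * C + pb * D)
  + u * l * (A + D - Bv - C).
  move=> pa pb; field; lra.
rewrite e.
have : u * l * (A + D - Bv - C) <= 0.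
  have : u * l <= 0 by nra.
  nra.
lra.
Qed.

Lemma prob_cat (D1 D2 : seq (R * point m)) f c :
  prob_f_le (D1 ++ D2) f c = prob_f_le D1 f c + prob_f_le D2 f c.
Proof.
rewrite /prob_f_le; elim: D1 => [|wp D1 IH] /=; first ring.
rewrite IH; ring.
Qed.

Lemma prob_map (D : seq (R * point m)) f c k :
  prob_f_le (map (scale_entry k) D) f c = k * prob_f_le D f c.
Proof.
rewrite /prob_f_le; elim: D => [|wp D IH] /=; first ring.
rewrite IH; case: wp => w q /=.
by case: (Rle_dec (f (supp q)) c) => ? /=; ring.
Qed.

Lemma pip_main (B : {set {set 'I_m}}) (f : {set 'I_m} -> R)
  (f_mono : forall S T, S \subset T -> f S <= f T)
  (f_submod : forall S T, f (S :|: T) + f (S :&: T) <= f S + f T)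
  lam c p D : 0 <= lam ->
  pipage (in_base_polytope B) p D ->
  prob_f_le D f c <= exp (lam * c) * Ex p (fun S => exp (- lam * f S)).
Proof.
move=> hlam hD; elim: hD => {p D}.
- move=> p hext; have [S1 ->] := ext_chi hext.
  rewrite /prob_f_le /= supp_chi Ex_chi.
  case: (Rle_dec _ _) => h.
  + rewrite -exp_plus Rplus_0_r.
    have : 0 <= lam * c + - lam * f S1 by nra.
    have := exp_ineq1_le (lam * c + - lam * f S1); lra.
  + rewrite Rplus_0_r; apply: Rmult_le_pos; left; exact: exp_pos.
- move=> p a b l u D1 D2 _ hab [eps [heps hnb]] hPl hl hPu hu _ IH1 _ IH2.
  have hl0 : l < 0.
    have : Rabs (- (eps / 2)) < eps by rewrite Rabs_Ropp Rabs_right; lra.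
    move/hnb/hl; lra.
  have hu0 : 0 < u.
    have : Rabs (eps / 2) < eps by rewrite Rabs_right; lra.
    move/hnb/hu; lra.
  have hp : in01 p.
    apply: (P01 (B := B)); rewrite -(move0 p a b); apply: hnb.
    rewrite Rabs_R0; lra.
  rewrite prob_cat !prob_map.
  have hal : 0 <= u / (u - l) by apply: Rmult_le_pos; [lra | left; apply: Rinv_0_lt_compat; lra].
  have hbe : 0 <= - l / (u - l) by apply: Rmult_le_pos; [lra | left; apply: Rinv_0_lt_compat; lra].
  have hsup : forall S, exp (- lam * f (a |: S)) + exp (- lam * f (b |: S)) <=
                        exp (- lam * f S) + exp (- lam * f (a |: (b |: S))).
    move=> S.
    have e1 : (a |: S) :|: (b |: S) = a |: (b |: S).
      by apply/setP => j; rewrite !inE; case: (j == a); case: (j == b); case: (j \in S).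
    have e2 : S \subset (a |: S) :&: (b |: S) by rewrite subsetI !subsetUr.
    have hs := f_submod (a |: S) (b |: S); rewrite e1 in hs.
    have hm := f_mono _ _ e2.
    have ha := f_mono _ _ (subsetUr [set a] S).
    have hb := f_mono _ _ (subsetUr [set b] S).
    move: hs hm ha hb.
    set f0 := f S; set fa := f (a |: S); set fb := f (b |: S);
      set fab := f (a |: (b |: S)); set fi := f (_ :&: _) => hs hm ha hb.
    have E1 : exp (- lam * (fa + fb - f0)) <= exp (- lam * fab) by apply: exp_mono; nra.
    set A0 := exp (- lam * f0).
    set s := exp (- lam * (fa - f0)); set r := exp (- lam * (fb - f0)).
    have ea : exp (- lam * fa) = A0 * s by rewrite /A0 /s -exp_plus; congr exp; ring.
    have eb : exp (- lam * fb) = A0 * r by rewrite /A0 /r -exp_plus; congr exp; ring.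
    have eab : exp (- lam * (fa + fb - f0)) = A0 * s * r.
      by rewrite /A0 /s /r -!exp_plus; congr exp; ring.
    have s1 : s <= 1 by rewrite /s -exp_0; apply: exp_mono; nra.
    have r1 : r <= 1 by rewrite /r -exp_0; apply: exp_mono; nra.
    have A0p : 0 < A0 by apply: exp_pos.
    have : 0 <= A0 * ((1 - s) * (1 - r)) by apply: Rmult_le_pos; [lra| apply: Rmult_le_pos; lra].
    rewrite ea eb; rewrite eab in E1; nra.
  have hstep := pip_step hp hab hl0 hu0 hsup.
  have k1 : u / (u - l) * prob_f_le D1 f c <=
            u / (u - l) * (exp (lam * c) * Ex (move p a b l) (fun S => exp (- lam * f S))).
    exact: Rmult_le_compat_l.
  have k2 : - l / (u - l) * prob_f_le D2 f c <=
            - l / (u - l) * (exp (lam * c) * Ex (move p a b u) (fun S => exp (- lam * f S))).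
    exact: Rmult_le_compat_l.
  have k3 := Rmult_le_compat_l _ _ _ (Rlt_le _ _ (exp_pos (lam * c))) hstep.
  lra.
Qed.

End Pip.

Theorem corollary3p4 (m : nat) (B : {set {set 'I_m}})
  (hB : is_matroid_bases B)
  (x0 : point m) (hx0 : in_base_polytope B x0)
  (f : {set 'I_m} -> R)
  (f_nonneg : forall S, (0 <= f S)%R)
  (f_mono : forall S T : {set 'I_m}, S \subset T -> (f S <= f T)%R)
  (f_submod : forall S T : {set 'I_m}, (f (S :|: T) + f (S :&: T) <= f S + f T)%R)
  (f_marg : forall (T : {set 'I_m}) (i : 'I_m),
      (0 <= f (i |: T) - f T <= 1)%R)
  (D : seq (R * point m)) (hD : pipage (in_base_polytope B) x0 D)
  (delta : R) (hdelta : (0 <= delta < 1)%R) :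
  (prob_f_le D f ((1 - delta) * multilinear f x0)
     <= exp (- (delta ^ 2 * multilinear f x0) / 2))%R.
Proof.
have hx01 := P01 hx0.
have hd : 0 <= delta <= 1 by lra.
have h1 := pip_main f_mono f_submod ((1 - delta) * multilinear f x0) (proj1 hdelta) hD.
have h2 := ic f_nonneg f_mono f_submod f_marg hd hx01.
change (multilinear f x0) with (Ex x0 f).
apply: (Rle_trans _ _ _ h1).
apply: (Rle_trans _ _ _ (Rmult_le_compat_l _ _ _ (Rlt_le _ _ (exp_pos _)) h2)).
rewrite -exp_plus; right; congr exp.
have -> : multilinear f x0 = Ex x0 f by [].
field.
Qed.
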